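(* Let $\Omega\subset\mathbb{R}^N$ be a bounded open connected set, $h\in C(\Omega)$, and $\Theta(x):=\{(r,A)\in\mathbb{R}\times\mathcal{S}(N): G(A)\ge h(x)\}$, where $G(A):=\sum_{i=1}^N\arctan(\lambda_i(A))$. Suppose there exist $k\in\{1,\dots,N-1\}$ and a sequence $(x_n)_{n\in\mathbb N}\subset\Omega$ converging to $x_0\in\Omega$ such that $h(x_0)=\theta_k:=(N-2k)\frac{\pi}{2}$ and either $h(x_n)>\theta_k$ for every $n$, or $h(x_n)<\theta_k$ for every $n$. Then $\Theta$ is not Hausdorff continuous on $\Omega$.
   Context: $\mathcal{S}(N)$: real symmetric $N\times N$ matrices; $\lambda_1(A)\le\dots\le\lambda_N(A)$ its eigenvalues. On $\mathbb{R}\times\mathcal{S}(N)$ use the norm $\|(r,A)\|=\max\{|r|,\max_i|\lambda_i(A)|\}$ and the Hausdorff distance $d_{\mathcal H}(\Phi,\Psi)=\inf\{\varepsilon>0:\Phi\subset N_\varepsilon(\Psi),\Psi\subset N_\varepsilon(\Phi)\}\in[0,\infty]$ on closed sets. $\Theta$ is Hausdorff continuous on $\Omega$ if for all $x\in\Omega$, $\eta>0$ there is $\delta>0$ with $d_{\mathcal H}(\Theta(x),\Theta(y))<\eta$ whenever $y\in\Omega$, $|x-y|<\delta$. *)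

(* Defs.v *)
From HB Require Import structures.
From mathcomp Require Import all_boot all_order all_algebra.
From mathcomp Require Import all_classical all_reals all_analysis.
Set Implicit Arguments. Unset Strict Implicit. Unset Printing Implicit Defensive.
Import Order.TTheory GRing.Theory Num.Theory.
Import numFieldNormedType.Exports.
Local Open Scope classical_set_scope.
Local Open Scope ring_scope.

Section Defs.
Variables (R : realType) (N : nat).

Definition is_spectrum (A : 'M[R]_N) (s : seq R) : Prop :=
  char_poly A = \prod_(l <- s) ('X - l%:P).

(* the sequence lambda_1(A) <= ... <= lambda_N(A) (for symmetric A the
   characteristic polynomial splits over R, so the first branch is taken;
   the sorted list is independent of the choice) *)
Definition eigenvalues (A : 'M[R]_N) : seq R :=
  match pselect (exists s, is_spectrum A s) with
  | left H => sort <=%R (projT1 (cid H))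
  | right _ => [::]
  end.

Definition lambda (A : 'M[R]_N) (i : 'I_N) : R := nth 0 (eigenvalues A) i.

Definition symmetric (A : 'M[R]_N) : Prop := A^T = A.

Definition Gop (A : 'M[R]_N) : R := \sum_(i < N) atan (lambda A i).

Definition pnorm (p : R * 'M[R]_N) : R :=
  Num.max `|p.1| (\big[Num.max/0]_(i < N) `|lambda p.2 i|).

Definition psub (p q : R * 'M[R]_N) : R * 'M[R]_N := (p.1 - q.1, p.2 - q.2).

Definition nbhd_eps (e : R) (Psi : set (R * 'M[R]_N)) : set (R * 'M[R]_N) :=
  [set p | exists2 q, Psi q & pnorm (psub p q) < e].

Definition hausdorff_dist (Phi Psi : set (R * 'M[R]_N)) : \bar R :=
  ereal_inf [set e%:E | e in [set e : R | 0 < e /\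
     Phi `<=` nbhd_eps e Psi /\ Psi `<=` nbhd_eps e Phi]].

Definition enorm (x : 'rV[R]_N) : R := Num.sqrt (\sum_(i < N) x ord0 i ^+ 2).

Definition hausdorff_continuous (Omega : set 'rV[R]_N)
    (Theta : 'rV[R]_N -> set (R * 'M[R]_N)) : Prop :=
  forall x, Omega x -> forall eta : R, 0 < eta ->
    exists2 delta : R, 0 < delta & forall y, Omega y -> enorm (x - y) < delta ->
      (hausdorff_dist (Theta x) (Theta y) < eta%:E)%E.

Definition Theta (h : 'rV[R]_N -> R) (x : 'rV[R]_N) : set (R * 'M[R]_N) :=
  [set p | symmetric p.2 /\ h x <= Gop p.2].

Definition theta_k (k : nat) : R := (N%:R - 2 * k%:R) * (pi / 2).

End Defs.

(* Main.v *)
Require Import Defs.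
From HB Require Import structures.
From mathcomp Require Import all_boot all_order all_algebra.
From mathcomp Require Import all_classical all_reals all_analysis.
From mathcomp Require Import complex sesquilinear spectral.
From mathcomp Require Import zify ring lra.
Import Order.TTheory GRing.Theory Num.Theory.
Import numFieldNormedType.Exports.
Local Open Scope classical_set_scope.
Local Open Scope ring_scope.
Set Implicit Arguments. Unset Strict Implicit. Unset Printing Implicit Defensive.
Section Spec.
Variables (R : realType) (N : nat).
Local Notation C := (R[i]).
Local Open Scope sesquilinear_scope.

Definition toC : R -> C := real_complex R.

Lemma real_spectral (B : 'M[R]_N) : B^T = B ->
  exists P : 'M[C]_N, exists d : 'I_N -> R,
    P \is unitarymx /\ B ^ toC = P^t* *m diag_mx (\row_i toC (d i)) *m P.
Proof.
move=> BT.
have H : B ^ toC \is hermsymmx.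
  rewrite qualifE /= expr0 scale1r; apply/eqP/matrixP => i j.
  rewrite !mxE -[in RHS]BT mxE /=.
  rewrite /toC /= conj_Creal //; apply/complex_realP; eexists; reflexivity.
have /orthomx_spectralP Heq := hermitian_normalmx H.
have Hr := hermitian_spectral_diag_real H.
exists (spectralmx (map_mx toC B)), (fun i => @complex.Re R (spectral_diag (map_mx toC B) 0 i)).
split; first exact: spectral_unitarymx.
rewrite -(invmx_unitary (spectral_unitarymx _)).
rewrite {1}Heq; congr (_ *m diag_mx _ *m _).
apply/rowP => i; rewrite mxE /toC RRe_real //.
exact: (mxOverP Hr).
Qed.
End Spec.
Lemma char_poly_conj {F : comNzRingType} n (Q P D : 'M[F]_n) :
  Q *m P = 1%:M -> char_poly (Q *m D *m P) = char_poly D.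
Proof.
move=> QP.
have QPp : map_mx polyC Q *m map_mx polyC P = 1%:M.
  by rewrite -map_mxM QP map_mx1.
have E : char_poly_mx (Q *m D *m P) =
    map_mx polyC Q *m char_poly_mx D *m map_mx polyC P.
  rewrite /char_poly_mx mulmxBr mulmxBl !map_mxM; congr (_ - _).
  by rewrite scalar_mxC -mulmxA QPp mulmx1.
rewrite /char_poly E !det_mulmx mulrAC -det_mulmx.
by rewrite QPp det1 mul1r.
Qed.

Section Spec2.
Variables (R : realType) (N : nat).
Local Notation C := (R[i]).
Local Open Scope sesquilinear_scope.

Lemma unitary_tr (P : 'M[C]_N) : P \is unitarymx -> P^t* *m P = 1%:M.
Proof. by move/unitarymxP; apply: mulmx1C. Qed.

Lemma spec_of (B : 'M[R]_N) (P : 'M[C]_N) (d : 'I_N -> R) :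
  P \is unitarymx -> map_mx (@toC R) B = P^t* *m diag_mx (\row_i @toC R (d i)) *m P ->
  is_spectrum B [seq d i | i <- enum 'I_N].
Proof.
move=> Pu Heq; rewrite /is_spectrum.
apply: (@map_poly_inj _ _ (real_complex R)).
rewrite map_char_poly.
have -> : map_mx (real_complex R) B = map_mx (@toC R) B by [].
rewrite Heq char_poly_conj; last exact: unitary_tr.
rewrite char_poly_trig; last exact: diag_mx_is_trig.
rewrite map_prod_XsubC big_map big_enum /=.
by apply: eq_bigr => i _; rewrite !mxE eqxx mulr1n.
Qed.

Lemma size_spec (B : 'M[R]_N) s : is_spectrum B s -> size s = N.
Proof.
move=> H; have := size_char_poly B; rewrite H size_prod_XsubC.
by case.
Qed.

Lemma eig_perm (B : 'M[R]_N) s : is_spectrum B s -> perm_eq (eigenvalues B) s.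
Proof.
move=> H; rewrite /eigenvalues; case: pselect => [H1|H1]; last first.
  by exfalso; apply: H1; exists s.
case: cid => s' /= Hs'.
rewrite perm_sort; apply: prod_XsubC_eq.
by rewrite -Hs' -H.
Qed.

Lemma Gop_spec (B : 'M[R]_N) s : is_spectrum B s ->
  Gop B = \sum_(x <- s) atan x.
Proof.
move=> H; have Hp := eig_perm H.
have Hsz : size (eigenvalues B) = N by rewrite (perm_size Hp) (size_spec H).
rewrite /Gop -(perm_big _ Hp) /= (big_nth 0) Hsz big_mkord.
by [].
Qed.

Lemma lambda_mem (B : 'M[R]_N) s x : is_spectrum B s -> x \in s ->
  exists i : 'I_N, lambda B i = x.
Proof.
move=> H xs; have Hp := eig_perm H.
have Hsz : size (eigenvalues B) = N by rewrite (perm_size Hp) (size_spec H).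
have xe : x \in eigenvalues B by rewrite (perm_mem Hp).
have Hi : (index x (eigenvalues B) < N)%N by move: (xe); rewrite -index_mem Hsz.
by exists (Ordinal Hi); rewrite /lambda /= nth_index.
Qed.

Lemma pnorm_lambda (p : R * 'M[R]_N) (i : 'I_N) : `|lambda p.2 i| <= pnorm p.
Proof.
rewrite /pnorm; rewrite le_max; apply/orP; right.
exact: (le_bigmax 0 (fun i => `|lambda p.2 i|) i).
Qed.

End Spec2.
Section Quad.
Variables (R : realType) (N : nat).
Local Notation C := (R[i]).
Local Open Scope sesquilinear_scope.

Definition qf (M : 'M[C]_N) (x : 'rV[C]_N) : C := (x *m M *m x^t*) 0 0.
Definition nrm (x : 'rV[C]_N) : C := (x *m x^t*) 0 0.

Lemma nrmE x : nrm x = \sum_i x 0 i * (x 0 i)^*.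
Proof. by rewrite /nrm mxE; apply: eq_bigr => i _; rewrite !mxE. Qed.

Lemma nrm_ge0 x : 0 <= nrm x.
Proof. by rewrite nrmE; apply: sumr_ge0 => i _; apply: mul_conjC_ge0. Qed.

Lemma nrm_gt0 x : x != 0 -> 0 < nrm x.
Proof.
move=> xn0; rewrite lt_def nrm_ge0 andbT; apply: contra xn0 => /eqP H.
apply/eqP/rowP => i; rewrite mxE; apply/eqP.
rewrite -mul_conjC_eq0; apply/eqP.
move: H; rewrite nrmE => H.
by apply: (psumr_eq0P _ H) => // j _; apply: mul_conjC_ge0.
Qed.

Lemma qf_diag (a : 'I_N -> C) x :
  qf (diag_mx (\row_i a i)) x = \sum_i a i * (x 0 i * (x 0 i)^*).
Proof.
rewrite /qf mxE; apply: eq_bigr => i _; rewrite !mxE.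
rewrite (bigD1 i) //= big1 => [|j /negbTE ji]; last by rewrite !mxE ji mulr0n mulr0.
by rewrite !mxE eqxx mulr1n addr0 mulrCA mulrA.
Qed.

Lemma trC_mul (x : 'rV[C]_N) (P : 'M[C]_N) : (x *m P)^t* = P^t* *m x^t*.
Proof. by rewrite trmx_mul map_mxM. Qed.

Lemma qf_conj (P : 'M[C]_N) dd x :
  qf (P^t* *m diag_mx dd *m P) x = qf (diag_mx dd) (x *m P^t*).
Proof.
rewrite /qf trC_mul trmxCK !mulmxA.
by [].
Qed.

Lemma nrm_unitary (P : 'M[C]_N) x : P \is unitarymx -> nrm (x *m P^t*) = nrm x.
Proof.
move=> Pu; rewrite /nrm trC_mul trmxCK mulmxA -(mulmxA x) unitary_tr //.
by rewrite mulmx1.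
Qed.

End Quad.
Section Count.
Variables (R : realType) (N : nat).
Local Notation C := (R[i]).
Local Open Scope sesquilinear_scope.

Lemma count_lemma (B : 'M[R]_N) (P : 'M[C]_N) (d : 'I_N -> R) m
  (V : 'M[C]_(m, N)) (c c' : R) :
  P \is unitarymx -> map_mx (@toC R) B = P^t* *m diag_mx (\row_i toC (d i)) *m P ->
  \rank V = m -> c' < c ->
  (forall x, (x <= V)%MS -> qf (map_mx (@toC R) B) x <= toC c' * nrm x) ->
  (m <= #|[set i | (d i < c)%R]%SET|)%N.
Proof.
move=> Pu HB rV cc' Hq.
set T := [set i | d i < c]%SET.
set S := (~: T)%SET.
rewrite leqNgt; apply/negP => Hlt.
pose f := (@enum_val _ (mem S)) : 'I_#|S| -> 'I_N.
pose E : 'M[C]_(#|S|, N) := \matrix_(j, i) ((f j == i)%:R).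
have EE : E *m E^t* = 1%:M.
  apply/matrixP => j j'; rewrite !mxE (bigD1 (f j)) //= big1 => [|i /negbTE ni].
    rewrite !mxE eqxx mul1r addr0 conjC_nat (inj_eq (@enum_val_inj _ _)).
    by rewrite eq_sym.
  by rewrite !mxE eq_sym ni mul0r.
have rU : \rank (E *m P) = #|S|.
  rewrite mxrankMfree; last by rewrite row_free_unit unitarymx_unit.
  by apply: mxrank_unitary; apply/unitarymxP; exact EE.
have cardS : (#|S| + #|T| = N)%N by rewrite addnC cardsC card_ord.
have rW : (0 < \rank (V :&: (E *m P)))%N.
  have := mxrank_sum_cap V (E *m P); have := rank_leq_col (V + E *m P)%MS.
  rewrite rV rU; lia.
rewrite lt0n mxrank_eq0 in rW.
set x := nz_row (V :&: E *m P)%MS.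
have xn0 : x != 0 by rewrite nz_row_eq0.
have xW := nz_row_sub (V :&: E *m P)%MS.
have xV : (x <= V)%MS := submx_trans xW (capmxSl _ _).
have /submxP [z xz] : (x <= E *m P)%MS := submx_trans xW (capmxSr _ _).
have Hy : x *m P^t* = z *m E by rewrite xz -!mulmxA (unitarymxP Pu) mulmx1.
have H1 := Hq x xV.
have H2 : toC c * nrm x <= qf (map_mx (@toC R) B) x.
  rewrite HB qf_conj qf_diag -(nrm_unitary x Pu) nrmE mulr_sumr.
  apply: ler_sum => i _.
  case: (boolP (i \in S)) => iS.
    apply: ler_wpM2r; first exact: mul_conjC_ge0.
    by rewrite /toC lecR; move: iS; rewrite inE inE /= -leNgt.
  have Hz : (x *m P^t*) 0 i = 0.
    rewrite Hy mxE big1 // => j _; rewrite mxE.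
    case: eqP => [Ei|]; last by rewrite mulr0.
    by exfalso; move: iS; rewrite -Ei enum_valP.
  by rewrite Hz mul0r !mulr0.
have := le_trans H2 H1.
by rewrite ler_pM2r ?nrm_gt0 // /toC lecR leNgt cc'.
Qed.

End Count.
Section Bounds.
Variables (R : realType) (N : nat).
Local Notation C := (R[i]).
Local Open Scope sesquilinear_scope.

Lemma qfB (X Y : 'M[C]_N) x : qf (X - Y) x = qf X x - qf Y x.
Proof. rewrite /qf mulmxBr mulmxBl. move: (x *m X *m x^t*) (x *m Y *m x^t*) => U W; by rewrite !mxE. Qed.

Lemma qf_lowbound (E : 'M[R]_N) (P : 'M[C]_N) (d : 'I_N -> R) (rho : R) x :
  P \is unitarymx -> map_mx (@toC R) E = P^t* *m diag_mx (\row_i toC (d i)) *m P ->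
  (forall i, `|d i| <= rho) ->
  toC (- rho) * nrm x <= qf (map_mx (@toC R) E) x.
Proof.
move=> Pu HE Hd.
rewrite HE qf_conj qf_diag -(nrm_unitary x Pu) nrmE mulr_sumr.
apply: ler_sum => i _; apply: ler_wpM2r; first exact: mul_conjC_ge0.
rewrite /toC lecR lerNl.
by apply: le_trans (Hd i); rewrite -normrN ler_norm.
Qed.

Lemma map_diag_toC (a : 'I_N -> R) :
  map_mx (@toC R) (diag_mx (\row_i a i)) = diag_mx (\row_i toC (a i)).
Proof.
apply/matrixP => i j; rewrite !mxE.
by case: eqP => _; rewrite ?mulr1n ?mulr0n // /toC.
Qed.

Lemma qf_A_pid (k : nat) (a : 'I_N -> R) (v : R) x :
  (forall i : 'I_N, (i < k)%N -> a i = v) ->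
  (x <= (pid_mx k : 'M[C]_(k, N)))%MS ->
  qf (map_mx (@toC R) (diag_mx (\row_i a i))) x = toC v * nrm x.
Proof.
move=> Ha /submxP [z ->].
rewrite map_diag_toC qf_diag nrmE mulr_sumr; apply: eq_bigr => i _.
case: (ltnP i k) => ik; first by rewrite Ha.
rewrite !mxE big1 ?mul0r ?mulr0 // => j _; rewrite !mxE.
have -> : ((j == i :> nat) && (j < k)%N) = false.
  by apply/negbTE; apply/negP => /andP [/eqP -> ]; rewrite ltnNge ik.
by rewrite mulr0.
Qed.

Lemma qf_A_all (a : 'I_N -> R) (v : R) x :
  (forall i, a i <= v) ->
  qf (map_mx (@toC R) (diag_mx (\row_i a i))) x <= toC v * nrm x.
Proof.
move=> Ha; rewrite map_diag_toC qf_diag nrmE mulr_sumr; apply: ler_sum => i _.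
by apply: ler_wpM2r; [exact: mul_conjC_ge0 | rewrite /toC lecR].
Qed.

Lemma atan_sum_bound (f : 'I_N -> R) (k : nat) (c c2 : R) :
  c <= c2 -> (k <= #|[set i | (f i < c)%R]%SET|)%N -> (forall i, f i < c2) ->
  \sum_i atan (f i) <= k%:R * atan c + (N%:R - k%:R) * atan c2.
Proof.
move=> cc2 Hk Hc2.
set T := [set i | (f i < c)%R]%SET.
rewrite (bigID (mem T)) /=.
have H1 : \sum_(i | i \in T) atan (f i) <= \sum_(i | i \in T) atan c.
  by apply: ler_sum => i; rewrite inE => /lt_atan/ltW.
have H2 : \sum_(i | i \notin T) atan (f i) <= \sum_(i | i \notin T) atan c2.
  by apply: ler_sum => i _; apply/ltW/lt_atan.
rewrite !sumr_const in H1 H2.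
have Hc : (#|T| + #|[predC T]|)%N = N by rewrite cardC card_ord.
have ac : atan c <= atan c2 by apply: le_atan.
move: H1 H2 Hk Hc; set t := #|T|; set u := #|_|.
move=> H1 H2 Hk Hc.
have Htk : 0 <= t%:R - k%:R :> R by rewrite subr_ge0 ler_nat.
have Hab : 0 <= atan c2 - atan c by rewrite subr_ge0.
have Hp := mulr_ge0 Htk Hab.
have HN : N%:R = t%:R + u%:R :> R by rewrite -natrD Hc.
move: H1 H2 Hp.
move: (\sum_(i in T) atan (f i)) (\sum_(i | i \notin T) atan (f i)) => S1 S2.
rewrite HN -(mulr_natr (atan c) t) -(mulr_natr (atan c2) u).
move: (atan c) (atan c2) (t%:R : R) (u%:R : R) (k%:R : R) => a b tt uu kk.
move=> H1 H2 Hp.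
apply: le_trans (lerD H1 H2) _; rewrite -subr_ge0.
have -> : kk * a + (tt + uu - kk) * b - (a * tt + b * uu) = (tt - kk) * (b - a) by ring.
exact: Hp.
Qed.
End Bounds.
Section Key.
Variables (R : realType) (N : nat).
Local Notation C := (R[i]).
Local Open Scope sesquilinear_scope.

Definition aval (k : nat) (M L : R) (i : nat) : R := if (i < k)%N then - M else L.

Definition adiag (k : nat) (M L : R) : 'M[R]_N := diag_mx (\row_(i < N) aval k M L i).

Lemma adiag_sym k M L : (adiag k M L)^T = adiag k M L.
Proof. by rewrite /adiag tr_diag_mx. Qed.

Lemma sum_enum (F : 'I_N -> R) (G : R -> R) :
  \sum_(x <- [seq F i | i <- enum 'I_N]) G x = \sum_i G (F i).
Proof. by rewrite big_map big_enum. Qed.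

Lemma Gop_adiag k M L : (k <= N)%N ->
  Gop (adiag k M L) = k%:R * atan (- M) + (N%:R - k%:R) * atan L.
Proof.
move=> kN.
have Hs : is_spectrum (adiag k M L) [seq aval k M L i | i : 'I_N <- enum 'I_N].
  rewrite /is_spectrum char_poly_trig ?diag_mx_is_trig // big_map big_enum /=.
  by apply: eq_bigr => i _; rewrite !mxE eqxx mulr1n.
rewrite (Gop_spec Hs) sum_enum.
rewrite -(big_mkord xpredT (fun i => atan (aval k M L i))).
rewrite (big_cat_nat (leq0n k) kN) /=.
rewrite (@eq_big_nat _ _ _ 0 k _ (fun=> atan (- M))); last first.
  by move=> i /andP [_ ik]; rewrite /aval ik.
rewrite (@eq_big_nat _ _ _ k N _ (fun=> atan L)); last first.
  by move=> i /andP [ki _]; rewrite /aval ltnNge ki.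
by rewrite !sumr_const_nat subn0 -(mulr_natl (atan (- M)) k) -(mulr_natl (atan L)) natrB.
Qed.

Lemma key k (M L rho : R) (B : 'M[R]_N) :
  (k <= N)%N -> 0 <= M + L -> rho < 1 -> B^T = B ->
  (forall i, `|lambda (adiag k M L - B) i| <= rho) ->
  Gop B <= k%:R * atan (1 - M) + (N%:R - k%:R) * atan (L + 1).
Proof.
move=> kN ML rho1 BT Hl.
set A := adiag k M L.
set E := A - B.
have symE : E^T = E by rewrite /E linearB /= adiag_sym BT.
have [PE [dE [PEu HE]]] := real_spectral symE.
have HsE := spec_of PEu HE.
have HdE : forall i, `|dE i| <= rho.
  move=> i; have : dE i \in [seq dE j | j <- enum 'I_N] by apply: map_f; rewrite mem_enum.
  by move/(lambda_mem HsE) => [j <-].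
have [PB [dB [PBu HB]]] := real_spectral BT.
have HsB := spec_of PBu HB.
have HBc : map_mx (@toC R) B = map_mx (@toC R) A - map_mx (@toC R) E.
  by rewrite -map_mxB /E opprB addrC subrK.
have C1 : (k <= #|[set i | (dB i < 1 - M)%R]%SET|)%N.
  apply: (count_lemma (c' := - M + rho) PBu HB (V := pid_mx k : 'M[C]_(k, N))).
  - by rewrite rank_pid_mx.
  - lra.
  move=> x Hx; rewrite HBc qfB (qf_A_pid (v := - M) _ Hx); last first.
    by move=> i ik; rewrite /aval ik.
  have := qf_lowbound x PEu HE HdE.
  move=> H; apply: le_trans (lerB (lexx _) H) _.
  rewrite le_eqVlt; apply/orP; left; apply/eqP.
  by rewrite /toC rmorphD !rmorphN /=; ring.
have C2 : (N <= #|[set i | (dB i < L + 1)%R]%SET|)%N.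
  have := count_lemma (c' := L + rho) (c := L + 1) PBu HB (V := 1%:M : 'M[C]_N).
  rewrite mxrank1; apply => //; first lra.
  move=> x _; rewrite HBc qfB.
  have H1 : qf (map_mx (@toC R) A) x <= toC L * nrm x.
    apply: qf_A_all => i; rewrite /aval; case: ifP => // _; lra.
  have := qf_lowbound x PEu HE HdE.
  move=> H; apply: le_trans (lerB H1 H) _.
  rewrite le_eqVlt; apply/orP; left; apply/eqP.
  by rewrite /toC rmorphD !rmorphN /=; ring.
have Hall : forall i, dB i < L + 1.
  move=> i; have : [set i | (dB i < L + 1)%R]%SET == [set: 'I_N]%SET.
    by rewrite eqEcard finset.subsetT cardsT card_ord.
  by move/eqP/setP/(_ i); rewrite !inE.
rewrite (Gop_spec HsB) sum_enum.
apply: atan_sum_bound => //; lra.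
Qed.

End Key.
Lemma entry_le (R : realType) n (v : 'rV[R]_n) i : `|v ord0 i| <= `|v|.
Proof.
have -> : `|v| = mx_norm v by [].
rewrite mx_normrE.
exact: (le_bigmax 0 (fun ij : 'I_1 * 'I_n => `|v ij.1 ij.2|) (ord0, i)).
Qed.
Lemma atan_big (R : realType) (eps : R) : 0 < eps -> exists T : R, 1 <= T /\ pi / 2 - atan T < eps.
Proof.
move=> ep.
have [M [_ HM]] := cvgr_dist_lt _ _ (@cvgy_atan R) _ ep.
exists (`|M| + 1); split.
  by rewrite lerDr.
have := HM (`|M| + 1) _.
move=> H; apply: le_lt_trans (H _).
  exact: ler_norm.
by apply: le_lt_trans (ler_norm M) _; rewrite ltrDl.
Qed.
Lemma conv_enorm (R : realType) N (x_ : nat -> 'rV[R]_N) (x0 : 'rV[R]_N) (delta : R) :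
  x_ @ \oo --> x0 -> 0 < delta -> exists n, Num.sqrt (\sum_(i < N) (x0 - x_ n) ord0 i ^+ 2) < delta.
Proof.
move=> Hc dp.
have N0 : 0 <= N%:R :> R := ler0n _ _.
set eps := delta / (N%:R + 1).
have ep : 0 < eps by rewrite divr_gt0 //; lra.
have [n Hn] := filter_ex (cvgr_dist_lt _ _ Hc _ ep).
exists n.
set v := x0 - x_ n.
have Hs : \sum_(i < N) v ord0 i ^+ 2 <= N%:R * eps ^+ 2.
  apply: (@le_trans _ _ (\sum_(i < N) eps ^+ 2)).
    apply: ler_sum => i _.
    have H1 := @entry_le _ _ v i.
    have H0 : 0 <= `|v ord0 i| := normr_ge0 _.
    rewrite -real_normK ?num_real //.
    have : `|v ord0 i| < eps by apply: le_lt_trans H1 Hn.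
    move: (`|v ord0 i|) H0 => a H0 Ha; nra.
  by rewrite sumr_const card_ord -(mulr_natl (eps ^+ 2) N).
have Hd : delta = eps * (N%:R + 1) by rewrite /eps divfK //; lra.
rewrite -(ger0_norm (ltW dp)) -sqrtr_sqr ltr_sqrt; last first.
  by rewrite exprn_gt0.
apply: le_lt_trans Hs _.
rewrite Hd; nra.
Qed.

Theorem proposition6p17 (R : realType) (N : nat) (Omega : set 'rV[R]_N)
  (h : 'rV[R]_N -> R) (k : nat) (x_ : nat -> 'rV[R]_N) (x0 : 'rV[R]_N) :
  bounded_set Omega -> open Omega -> connected Omega ->
  {within Omega, continuous h} ->
  (1 <= k <= N.-1)%N ->
  (forall n, Omega (x_ n)) -> Omega x0 -> x_ @ \oo --> x0 ->
  h x0 = theta_k R N k ->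
  ((forall n, theta_k R N k < h (x_ n)) \/ (forall n, h (x_ n) < theta_k R N k)) ->
  ~ hausdorff_continuous Omega (Theta h).
Proof.
move=> _ _ _ _ /andP[k1 kN1] HxO Hx0 Hcvg Hh0 Hcase Hcont.
have kN : (k <= N)%N by lia.
have kltN : (k < N)%N by lia.
have Kpos : 0 < k%:R :> R by rewrite ltr0n.
have NKpos : 0 < N%:R - k%:R :> R by rewrite subr_gt0 ltr_nat.
have [delta dpos Hd] := Hcont x0 Hx0 1 ltr01.
have [n Hn] := @conv_enorm R N x_ x0 delta Hcvg dpos.
have Hh := Hd _ (HxO n) Hn.
have [_ [e [epos [I1 I2]] <-]] := ereal_inf_lt Hh.
rewrite lte_fin => e1.
rewrite /theta_k in Hh0 Hcase.
have Hpi := @atan_ltpi2 R.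
case: Hcase => Hc; have Hv := Hc n; clear Hc.
- have sp : 0 < h (x_ n) - (N%:R - 2 * k%:R) * (pi / 2) by rewrite subr_gt0.
  have [T1 [T1ge HT1]] := @atan_big R ((h (x_ n) - (N%:R - 2 * k%:R) * (pi / 2)) / k%:R)
    (divr_gt0 sp Kpos).
  rewrite ltr_pdivlMr // in HT1.
  have aM : 0 < pi / 2 - atan (T1 + 1) by rewrite subr_gt0.
  have [T2 [T2ge HT2]] := @atan_big R (k%:R * (pi / 2 - atan (T1 + 1)) / (N%:R - k%:R))
    (divr_gt0 (mulr_gt0 Kpos aM) NKpos).
  rewrite ltr_pdivlMr // in HT2.
  pose A := @adiag R N k (T1 + 1) T2.
  have GA := @Gop_adiag R N k (T1 + 1) T2 kN.
  rewrite atanN in GA.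
  have inA : Theta h x0 (0, A).
    split; first exact: adiag_sym.
    rewrite Hh0 /= GA; lra.
  have [q [symq Hq] Hpq] := I1 _ inA.
  have Hkey := @key R N k (T1 + 1) T2 (pnorm (psub (0, A) q)) q.2 kN.
  have := Hkey ltac:(lra) (lt_trans Hpq e1) symq (fun i => pnorm_lambda (psub (0, A) q) i).
  rewrite (_ : 1 - (T1 + 1) = - T1); last by lra.
  rewrite atanN => HB.
  have F1 : (N%:R - k%:R) * atan (T2 + 1) <= (N%:R - k%:R) * (pi / 2).
    by rewrite ler_wpM2l // ?ltW.
  lra.
- have sp : 0 < (N%:R - 2 * k%:R) * (pi / 2) - h (x_ n) by rewrite subr_gt0.
  have [T2 [T2ge HT2]] := @atan_big R (((N%:R - 2 * k%:R) * (pi / 2) - h (x_ n)) / (N%:R - k%:R))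
    (divr_gt0 sp NKpos).
  rewrite ltr_pdivlMr // in HT2.
  have bL : 0 < pi / 2 - atan (T2 + 1) by rewrite subr_gt0.
  have [T1 [T1ge HT1]] := @atan_big R ((N%:R - k%:R) * (pi / 2 - atan (T2 + 1)) / k%:R)
    (divr_gt0 (mulr_gt0 NKpos bL) Kpos).
  rewrite ltr_pdivlMr // in HT1.
  pose A := @adiag R N k (T1 + 1) T2.
  have GA := @Gop_adiag R N k (T1 + 1) T2 kN.
  rewrite atanN in GA.
  have F0 : k%:R * atan (T1 + 1) <= k%:R * (pi / 2).
    by rewrite ler_wpM2l // ?ltW.
  have inA : Theta h (x_ n) (0, A).
    split; first exact: adiag_sym.
    rewrite /= GA; lra.
  have [q [symq Hq] Hpq] := I2 _ inA.
  have Hkey := @key R N k (T1 + 1) T2 (pnorm (psub (0, A) q)) q.2 kN.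
  have := Hkey ltac:(lra) (lt_trans Hpq e1) symq (fun i => pnorm_lambda (psub (0, A) q) i).
  rewrite (_ : 1 - (T1 + 1) = - T1); last by lra.
  rewrite atanN => HB.
  rewrite Hh0 in Hq.
  lra.
Qed.
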